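(* Let $n\ge 3$, let $K$ be a field and $S_n$ as defined below. If $Q$ is a prime ideal of the monoid $S_n$, then $Q\supseteq a_1a_2\cdots a_nS_n$ and $K[Q]$ is a prime ideal of $K[S_n]$; moreover $K[S_n]/K[Q]$ is isomorphic to a prime monomial algebra.
   Context: For $n\ge 3$, $S_n$ denotes the monoid with generators $a_1,\dots,a_n$ and defining relations $a_1a_2\cdots a_n=a_{\sigma(1)}a_{\sigma(2)}\cdots a_{\sigma(n)}$ for all $\sigma$ in the cyclic subgroup of $\operatorname{Sym}_n$ generated by the cycle $(1,2,\dots,n)$. An ideal $Q\neq S$ of a monoid $S$ is prime if $aSb\subseteq Q$ with $a,b\in S$ implies $a\in Q$ or $b\in Q$. For an ideal $I$ of $S_n$, $K[I]$ denotes the $K$-linear span of $I$ in $K[S_n]$. A monomial algebra is a quotient of a free algebra $K\langle x_1,\dots,x_m\rangle$ by an ideal spanned by words. *)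

(* Defs.v *)
From HB Require Import structures.
From mathcomp Require Import all_boot all_order all_algebra.
Set Implicit Arguments. Unset Strict Implicit. Unset Printing Implicit Defensive.
Import GRing.Theory.
Local Open Scope ring_scope.

(* Words over the alphabet 'I_m are [seq 'I_m]; an element of the free
   algebra K<x_0..x_(m-1)> is represented by its coefficient function
   seq 'I_m -> K, required to have finite support (= bounded degree,
   since 'I_m is finite). *)

Definition ncp (K : fieldType) (m : nat) := seq 'I_m -> K.

Definition fsupp (K : fieldType) m (f : ncp K m) : Prop :=
  exists N : nat, forall w : seq 'I_m, (N <= size w)%N -> f w = 0.

Definition pzero (K : fieldType) m : ncp K m := fun _ => 0.
Definition pone (K : fieldType) m : ncp K m := fun w => (w == [::])%:R.
Definition pmono (K : fieldType) m (u : seq 'I_m) : ncp K m :=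
  fun w => (w == u)%:R.
Definition padd (K : fieldType) m (f g : ncp K m) : ncp K m :=
  fun w => f w + g w.
Definition psub (K : fieldType) m (f g : ncp K m) : ncp K m :=
  fun w => f w - g w.
Definition pscale (K : fieldType) m (c : K) (f : ncp K m) : ncp K m :=
  fun w => c * f w.
Definition pmul (K : fieldType) m (f g : ncp K m) : ncp K m :=
  fun w => \sum_(i < (size w).+1) f (take i w) * g (drop i w).

Definition is_ideal (K : fieldType) m (I : ncp K m -> Prop) : Prop :=
  [/\ forall f, I f -> fsupp f,
      I (@pzero K m),
      forall f g, I f -> I g -> I (padd f g),
      forall c f, I f -> I (pscale c f)
    & forall f g, fsupp f -> I g -> I (pmul f g) /\ I (pmul g f)].

Definition prime_ideal (K : fieldType) m (I : ncp K m -> Prop) : Prop :=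
  [/\ is_ideal I,
      exists f, fsupp f /\ ~ I f
    & forall a b, fsupp a -> fsupp b ->
        (forall r, fsupp r -> I (pmul (pmul a r) b)) -> I a \/ I b].

(* generator a_(i+1) is i : 'I_n ; a_1 a_2 ... a_n is the word [enum 'I_n];
   a_(sigma 1) ... a_(sigma n) for sigma = (1 2 ... n)^k is [rot k (enum 'I_n)]. *)
Definition prodA (n : nat) : seq 'I_n := enum 'I_n.

Inductive Sn_equiv (n : nat) : seq 'I_n -> seq 'I_n -> Prop :=
| Sn_refl w : Sn_equiv w w
| Sn_step u v k k' w : Sn_equiv w (u ++ rot k (prodA n) ++ v) ->
                      Sn_equiv w (u ++ rot k' (prodA n) ++ v).

(* ideal of the monoid S_n, described by the set of words representing
   its elements; "Q <> S_n" and nonemptiness included *)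
Definition Sn_ideal (n : nat) (Q : seq 'I_n -> Prop) : Prop :=
  [/\ forall u v, Sn_equiv u v -> Q u -> Q v,
      forall w u v, Q w -> Q (u ++ w ++ v),
      exists w, Q w
    & exists w, ~ Q w].

Definition Sn_prime_ideal (n : nat) (Q : seq 'I_n -> Prop) : Prop :=
  Sn_ideal Q /\
  forall a b, (forall s, Q (a ++ s ++ b)) -> Q a \/ Q b.

(* J = ideal of K<x> spanned by u (a_1..a_n) v - u (a_sigma(1)..a_sigma(n)) v;
   K[S_n] is represented by K<x> modulo J. *)
Inductive relJ (K : fieldType) (n : nat) : ncp K n -> Prop :=
| relJ0 : relJ (@pzero K n)
| relJS f c u v k k' : relJ f ->
    relJ (padd f (pscale c (psub (@pmono K n (u ++ rot k (prodA n) ++ v))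
                                 (@pmono K n (u ++ rot k' (prodA n) ++ v))))).

Definition wspan (K : fieldType) m (W : seq 'I_m -> Prop) (f : ncp K m) : Prop :=
  fsupp f /\ forall w, ~ W w -> f w = 0.

(* preimage in K<x> of K[Q] subset K[S_n] : span(Q) + J *)
Definition KQ (K : fieldType) n (Q : seq 'I_n -> Prop) (f : ncp K n) : Prop :=
  fsupp f /\ exists g h, @wspan K n Q g /\ relJ h /\ forall w, f w = g w + h w.

(* W is an ideal of the free monoid (so that its span is the ideal of a
   monomial algebra) *)
Definition word_ideal m (W : seq 'I_m -> Prop) : Prop :=
  forall w u v, W w -> W (u ++ w ++ v).

(* phi induces a K-algebra isomorphism  K<x>/I1 ~= K<y>/I2 *)
Definition quot_iso (K : fieldType) n m (I1 : ncp K n -> Prop)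
    (I2 : ncp K m -> Prop) (phi : ncp K n -> ncp K m) : Prop :=
  (forall f, fsupp f -> fsupp (phi f)) /\
  [/\ forall c f g, fsupp f -> fsupp g ->
        I2 (psub (phi (padd (pscale c f) g)) (padd (pscale c (phi f)) (phi g))),
      forall f g, fsupp f -> fsupp g ->
        I2 (psub (phi (pmul f g)) (pmul (phi f) (phi g))),
      I2 (psub (phi (@pone K n)) (@pone K m)),
      forall f, fsupp f -> (I2 (phi f) <-> I1 f)
    & forall g, fsupp g -> exists f, fsupp f /\ I2 (psub (phi f) g)].

(* Main.v *)
Require Import Defs.
From mathcomp Require Import all_boot all_order all_algebra.
From Stdlib Require Import Lia Classical FunctionalExtensionality PropExtensionality.
Import GRing.Theory.

Ltac nlia := repeat match goal with
  | H : is_true (_ <= _)%N |- _ => move/leP: H => H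
  | H : is_true (_ == _)%N |- _ => move/eqP: H => H
  | H : context [addn] |- _ => rewrite -plusE in H
  | H : context [subn] |- _ => rewrite -minusE in H
  end;
  try apply/leP; rewrite -?plusE -?minusE; lia.

Section SnEq.
Variable n : nat.
Local Notation z := (prodA n).

Lemma se_trans (a b c : seq 'I_n) : Sn_equiv a b -> Sn_equiv b c -> Sn_equiv a c.
Proof.
move=> Hab Hbc; move: Hbc Hab; elim => [w|u v k k' w H IH] Hab; first by [].
exact: (Sn_step k' (IH Hab)).
Qed.

Lemma se_step1 (u v : seq 'I_n) k k' :
  Sn_equiv (u ++ rot k z ++ v) (u ++ rot k' z ++ v).
Proof. exact: (Sn_step k' (Sn_refl _)). Qed.

Lemma se_sym (a b : seq 'I_n) : Sn_equiv a b -> Sn_equiv b a.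
Proof.
elim => [w|u v k k' w H IH]; first exact: Sn_refl.
exact: se_trans (se_step1 u v k' k) IH.
Qed.

Lemma se_cong (x y a b : seq 'I_n) : Sn_equiv a b -> Sn_equiv (x ++ a ++ y) (x ++ b ++ y).
Proof.
elim => [w|u v k k' w H IH]; first exact: Sn_refl.
have e k0 : x ++ (u ++ rot k0 z ++ v) ++ y = (x ++ u) ++ rot k0 z ++ (v ++ y)
  by rewrite !catA.
rewrite e; apply: (Sn_step k'); rewrite -e; exact: IH.
Qed.

Lemma se_congl (x a b : seq 'I_n) : Sn_equiv a b -> Sn_equiv (x ++ a) (x ++ b).
Proof. move=> H; have := se_cong x [::] _ _ H; by rewrite !cats0. Qed.

Lemma se_congr (y a b : seq 'I_n) : Sn_equiv a b -> Sn_equiv (a ++ y) (b ++ y).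
Proof. move=> H; exact: (se_cong [::] y _ _ H). Qed.

Lemma rot_val (y : 'I_n) :
  rot y z = y :: (drop y.+1 z ++ take y z).
Proof.
have hs : (y < size z)%N by rewrite /prodA size_enum_ord.
by rewrite /rot (drop_nth y hs) /prodA nth_ord_enum.
Qed.

Lemma comm1 (y : 'I_n) : Sn_equiv ([:: y] ++ z) (z ++ [:: y]).
Proof.
have hs : (y < size z)%N by rewrite /prodA size_enum_ord.
have e1 : [:: y] ++ rot y.+1 z ++ [::] = [::] ++ rot y z ++ [:: y].
  rewrite rot_val /rot cats0 (take_nth y hs) /prodA nth_ord_enum /=.
  by rewrite -cats1 !catA.
have h1 := se_step1 [:: y] [::] 0 y.+1.
have h2 := se_step1 [::] [:: y] y 0.
rewrite rot0 cats0 e1 in h1; rewrite rot0 /= in h2.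
exact: se_trans h1 h2.
Qed.

Lemma commw (b : seq 'I_n) : Sn_equiv (b ++ z) (z ++ b).
Proof.
elim: b => [|y b IH]; first by rewrite cats0; exact: Sn_refl.
have h1 : Sn_equiv ([:: y] ++ (b ++ z)) ([:: y] ++ (z ++ b)) by apply: se_congl.
have h2 : Sn_equiv (([:: y] ++ z) ++ b) ((z ++ [:: y]) ++ b) by apply: se_congr; exact: comm1.
rewrite -catA in h2; rewrite -catA /= in h2.
exact: se_trans h1 h2.
Qed.

Definition zp j := flatten (nseq j z).

Lemma rep (w : seq 'I_n) : exists a b, Sn_equiv (zp (size w)) (a ++ w ++ b).
Proof.
elim/last_ind: w => [|w y [a [b IH]]]; first by exists [::], [::]; exact: Sn_refl.
exists a, (drop y.+1 z ++ take y z ++ b).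
rewrite size_rcons /zp /= -/(zp _).
have h1 : Sn_equiv (z ++ zp (size w)) (z ++ (a ++ w ++ b)) by apply: se_congl.
have h2 : Sn_equiv ((z ++ (a ++ w)) ++ b) (((a ++ w) ++ z) ++ b)
  by apply: se_congr; apply: se_sym; apply: commw.
have h3 := se_step1 (a ++ w) b 0 y.
rewrite rot0 rot_val in h3.
apply: se_trans h1 _; rewrite !catA in h2 *; apply: se_trans h2 _.
rewrite -!catA in h3 *. rewrite -cats1 -!catA /=. by move: h3; rewrite /= -catA.
Qed.

End SnEq.

Lemma zp_Q n (Q : seq 'I_n -> Prop) : Sn_prime_ideal Q -> forall j, Q (zp n j) -> Q (prodA n).
Proof.
case=> [[Hcl Hid Hne Hpr]] Hprime.
elim=> [|j IH] HQ.
  by have := Hid [::] [::] (prodA n) HQ.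
case: (Hprime (prodA n) (zp n j)) => // s.
apply: (Hcl (s ++ prodA n ++ zp n j)).
  have := se_congr n (zp n j) _ _ (commw n s). by rewrite -!catA.
by have := Hid _ s [::] HQ; rewrite cats0.
Qed.

Lemma Qz n (Q : seq 'I_n -> Prop) : Sn_prime_ideal Q -> forall s, Q (prodA n ++ s).
Proof.
move=> HP s; have HP' := HP; case: HP' => [[Hcl Hid [w Hw] Hpr]] _.
case: (rep n w) => a [b E].
have Hz : Q (prodA n).
  apply: (zp_Q _ _ HP (size w)); apply: (Hcl _ _ (se_sym n _ _ E)); exact: Hid.
by have := Hid _ [::] s Hz.
Qed.

Section Alg.
Variable K : fieldType.
Variable m : nat.
Implicit Types f g h : ncp K m.
Local Open Scope ring_scope.

Lemma fsupp_add f g : fsupp f -> fsupp g -> fsupp (padd f g).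
Proof.
move=> [N1 H1] [N2 H2]; exists (maxn N1 N2) => w hw.
have h1 : (N1 <= size w)%N := leq_trans (leq_maxl _ _) hw.
have h2 : (N2 <= size w)%N := leq_trans (leq_maxr _ _) hw.
by rewrite /padd H1 // H2 // addr0.
Qed.

Lemma fsupp_scale c f : fsupp f -> fsupp (pscale c f).
Proof. by move=> [N H]; exists N => w hw; rewrite /pscale H // mulr0. Qed.

Lemma fsupp_sub f g : fsupp f -> fsupp g -> fsupp (psub f g).
Proof.
move=> [N1 H1] [N2 H2]; exists (maxn N1 N2) => w hw.
have h1 : (N1 <= size w)%N := leq_trans (leq_maxl _ _) hw.
have h2 : (N2 <= size w)%N := leq_trans (leq_maxr _ _) hw.
by rewrite /psub H1 // H2 // subrr.
Qed.

Lemma fsupp_mono u : fsupp (@pmono K m u).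
Proof.
exists (size u).+1 => w hw; rewrite /pmono.
case: eqP => [e|_] //; by rewrite e ltnn in hw.
Qed.

Lemma fsupp_zero h : (forall w, h w = 0) -> fsupp h.
Proof. by move=> H; exists 0%N => w _. Qed.

Lemma fsupp_mul f g : fsupp f -> fsupp g -> fsupp (pmul f g).
Proof.
move=> [N1 H1] [N2 H2]; exists (N1 + N2)%N => w hw.
rewrite /pmul big1 // => i _.
have hi : (i <= size w)%N by rewrite -ltnS ltn_ord.
case: (leqP N1 i) => h.
  by rewrite H1 ?mul0r // size_takel.
rewrite H2 ?mulr0 // size_drop. nlia.
Qed.

Variable W : seq 'I_m -> Prop.
Hypothesis Hid : forall w u v, W w -> W (u ++ w ++ v).

Lemma wspan_zero h : (forall w, h w = 0) -> wspan W h.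
Proof. by move=> H; split; [exact: fsupp_zero|move=> w _; exact: H]. Qed.

Lemma wspan_add f g : wspan W f -> wspan W g -> wspan W (padd f g).
Proof.
move=> [F1 H1] [F2 H2]; split; first exact: fsupp_add.
by move=> w hw; rewrite /padd H1 // H2 // addr0.
Qed.

Lemma wspan_scale c f : wspan W f -> wspan W (pscale c f).
Proof.
move=> [F1 H1]; split; first exact: fsupp_scale.
by move=> w hw; rewrite /pscale H1 // mulr0.
Qed.

Lemma wspan_sub f g : wspan W f -> wspan W g -> wspan W (psub f g).
Proof.
move=> [F1 H1] [F2 H2]; split; first exact: fsupp_sub.
by move=> w hw; rewrite /psub H1 // H2 // subrr.
Qed.

Lemma wspan_mono u : W u -> wspan W (@pmono K m u).
Proof.
move=> Hu; split; first exact: fsupp_mono.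
move=> w hw; rewrite /pmono; case: eqP => [e|] //; by rewrite e in hw.
Qed.

Lemma W_take w i : W (take i w) -> W w.
Proof. by move=> H; have := Hid (take i w) [::] (drop i w) H; rewrite /= cat_take_drop. Qed.

Lemma W_drop w i : W (drop i w) -> W w.
Proof. by move=> H; have := Hid (drop i w) (take i w) [::] H; rewrite cats0 cat_take_drop. Qed.

Lemma wspan_mul f g : fsupp f -> wspan W g -> wspan W (pmul f g) /\ wspan W (pmul g f).
Proof.
move=> Ff [Fg Hg]; split; split.
- exact: fsupp_mul.
- move=> w hw; rewrite /pmul big1 // => i _.
  rewrite Hg ?mulr0 //; move=> H; apply: hw; exact: W_drop H.
- exact: fsupp_mul.
- move=> w hw; rewrite /pmul big1 // => i _.
  rewrite Hg ?mul0r //; move=> H; apply: hw; exact: W_take H.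
Qed.

Lemma wspan_ideal : is_ideal (@wspan K m W).
Proof.
split.
- by move=> f [].
- by apply: wspan_zero.
- exact: wspan_add.
- exact: wspan_scale.
- exact: wspan_mul.
Qed.

End Alg.

Lemma ex_max (P : nat -> Prop) d l : P l -> (forall l', P l' -> (l' < l + d)%N) ->
  exists k, P k /\ forall l', P l' -> (l' <= k)%N.
Proof.
elim: d l => [|d IH] l Pl Hb.
  by have := Hb l Pl; rewrite addn0 ltnn.
case: (classic (exists l', P l' /\ (l < l')%N)) => [[l' [Pl' hl]]|hn].
  apply: (IH l' Pl') => l'' Pl''; have := Hb l'' Pl''; move=> hh; nlia.
exists l; split => // l' Pl'; rewrite leqNgt; apply/negP => h; apply: hn; by exists l'.
Qed.

Lemma arith1 (j a b c : nat) : (j <= c)%N -> (c - j)%N = b -> c = (a + b)%N -> j = a.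
Proof. move=> h1 h2 h3; nlia. Qed.

Lemma arith2 (i j X U S V T : nat) : T = i -> (j <= T)%N -> (T - j)%N = S ->
  (j <= U)%N -> (X - i <= V)%N -> X = (U + S + V)%N -> i = (U + S)%N.
Proof. move=> h1 h2 h3 h4 h5 h6; nlia. Qed.

Section Prime.
Variable K : fieldType.
Variable m : nat.
Local Open Scope ring_scope.
Variable W : seq 'I_m -> Prop.
Hypothesis Hid : forall w u v, W w -> W (u ++ w ++ v).

Lemma max_word (a : ncp K m) : fsupp a -> (exists w, ~W w /\ a w <> 0) ->
  exists u, [/\ ~W u, a u <> 0 & forall x, ~W x -> a x <> 0 -> (size x <= size u)%N].
Proof.
move=> [N H] [w [hw haw]].
pose P := fun l => exists x, size x = l /\ ~W x /\ a x <> 0.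
have Pw : P (size w) by exists w.
have Hbd : forall l', P l' -> (l' < size w + N)%N.
  move=> l' [x [sx [hx hax]]]; case: (leqP N l') => h.
    by case: hax; apply: H; rewrite sx.
  nlia.
have [k [[x [sx [hx hax]]] Hk]] := ex_max _ _ _ Pw Hbd.
exists x; split => // y hy hay; rewrite sx; apply: Hk; by exists y.
Qed.

Lemma notin_span (a : ncp K m) : fsupp a -> ~ wspan W a -> exists w, ~W w /\ a w <> 0.
Proof.
move=> fa na; apply: NNPP => hn; apply: na; split => // w hw.
apply: NNPP => haw; apply: hn; by exists w.
Qed.

Lemma key (a b : ncp K m) u v s :
  (forall x, ~W x -> a x <> 0 -> (size x <= size u)%N) ->
  (forall x, ~W x -> b x <> 0 -> (size x <= size v)%N) ->
  ~ W (u ++ s ++ v) ->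
  pmul (pmul a (pmono K s)) b (u ++ s ++ v) = a u * b v.
Proof.
move=> Ha Hb hX.
set X := u ++ s ++ v.
have sX : size X = (size u + size s + size v)%N by rewrite /X !size_cat addnA.
set k := (size u + size s)%N.
have hk : (k < (size X).+1)%N by rewrite ltnS sX leq_addr.
have Hi0 : forall i : 'I_(size X).+1, val i = k -> i = inord k.
  by move=> i e; apply: val_inj; rewrite /= inordK.
have eX : X = (u ++ s) ++ v by rewrite /X catA.
rewrite /pmul (bigD1 (inord k)) //= [Y in _ + Y = _]big1 ?addr0.
- rewrite inordK //.
  have -> : take k X = u ++ s by rewrite eX take_size_cat // size_cat.
  have -> : drop k X = v by rewrite eX drop_size_cat // size_cat.
  set k2 := size u.
  have hk2 : (k2 < (size (u ++ s)).+1)%N by rewrite ltnS size_cat leq_addr.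
  rewrite (bigD1 (inord k2)) //= [Y in _ + Y]big1 ?addr0.
    rewrite inordK // take_size_cat // drop_size_cat //.
    by rewrite /pmono eqxx mulr1.
  move=> j hj; rewrite /pmono; case: eqP => e; last by rewrite mulr0.
  exfalso; move/negP: hj; apply; apply/eqP; apply: val_inj; rewrite /= inordK //.
  have hj : (j <= size (u ++ s))%N by rewrite -ltnS ltn_ord.
  have es := congr1 size e; rewrite size_drop in es.
  apply: (@arith1 _ _ (size s) (size (u ++ s))); [exact: hj | exact: es | exact: size_cat].
- move=> i hi.
  have hiX : (i <= size X)%N by rewrite -ltnS ltn_ord.
  case: (eqVneq (b (drop i X)) 0) => hb; first by rewrite hb mulr0.
  have hd : ~ W (drop i X) by move=> H; apply: hX; exact: (W_drop _ _ Hid _ _ H).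
  have hb' : b (drop i X) <> 0 by apply/eqP.
  have := Hb _ hd hb'; rewrite size_drop => hsz.
  rewrite big1 ?mul0r // => j _.
  rewrite /pmono; case: eqP => e; last by rewrite mulr0.
  case: (eqVneq (a (take j (take i X))) 0) => ha; first by rewrite ha mul0r.
  have ht : ~ W (take j (take i X)).
    move=> H; apply: hX; apply: (W_take _ _ Hid _ i); exact: (W_take _ _ Hid _ _ H).
  have ha' : a (take j (take i X)) <> 0 by apply/eqP.
  have := Ha _ ht ha' => hsa.
  have hj : (j <= size (take i X))%N by rewrite -ltnS ltn_ord.
  have hsi : size (take i X) = i by rewrite size_takel.
  rewrite (size_takel hj) in hsa.
  have es := congr1 size e; rewrite size_drop in es.
  exfalso; move/negP: hi; apply; apply/eqP; apply: Hi0.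
  apply: (@arith2 _ j (size X) (size u) (size s) (size v) (size (take i X))); [exact: hsi|exact: hj|exact: es|exact: hsa|exact: hsz|exact: sX].
Qed.

Lemma wspan_prime : (exists w, ~W w) ->
  (forall a b, (forall s, W (a ++ s ++ b)) -> W a \/ W b) -> prime_ideal (@wspan K m W).
Proof.
move=> [w0 hw0] Hprime; split; first exact: (@wspan_ideal K m W Hid).
  exists (pmono K [::]); split; first exact: (fsupp_mono K m [::]).
  move=> [_ H]; have : ~ W [::].
    by move=> h; apply: hw0; have := Hid [::] [::] w0 h.
  move/H; rewrite /pmono eqxx => /eqP; by rewrite oner_eq0.
move=> a b fa fb H.
case: (classic (wspan W a)) => ha; first by left.
case: (classic (wspan W b)) => hb; first by right.
exfalso.
have [u [hu hau Hu]] := max_word a fa (notin_span a fa ha).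
have [v [hv hbv Hv]] := max_word b fb (notin_span b fb hb).
have [s hs] : exists s, ~ W (u ++ s ++ v).
  apply: not_all_ex_not => Hall; by case: (Hprime u v Hall).
have [_ Hz] := H (pmono K s) (fsupp_mono K m s).
have := Hz _ hs; rewrite (key a b u v s Hu Hv hs) => /eqP; rewrite mulf_eq0 => /orP [] /eqP //.
Qed.

End Prime.

Lemma relJ_wspan (K : fieldType) n (Q : seq 'I_n -> Prop) :
  (forall w u v, Q w -> Q (u ++ w ++ v)) ->
  (forall u v k, Q (u ++ rot k (prodA n) ++ v)) ->
  forall h, @relJ K n h -> wspan Q h.
Proof.
move=> Hid Hrot h; elim => [|f c u v k k' _ IH].
  by apply: wspan_zero.
apply: wspan_add => //; apply: wspan_scale; apply: wspan_sub; exact: wspan_mono.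
Qed.

Theorem mainTheorem7 (K : fieldType) (n : nat) (Q : seq 'I_n -> Prop) :
  (3 <= n)%N -> Sn_prime_ideal Q ->
  [/\ forall s : seq 'I_n, Q (prodA n ++ s),
      prime_ideal (@KQ K n Q)
    & exists (m : nat) (W : seq 'I_m -> Prop) (phi : ncp K n -> ncp K m),
        [/\ word_ideal W,
            prime_ideal (@wspan K m W)
          & quot_iso (@KQ K n Q) (@wspan K m W) phi]].
Proof.
move=> _ HP.
have Hz := Qz n Q HP.
case: HP => [[Hcl Hid Hne Hpr]] Hprime.
have Hrot : forall u v k, Q (u ++ rot k (prodA n) ++ v).
  move=> u v k; apply: (Hcl (u ++ rot 0 (prodA n) ++ v)); first exact: se_step1.
  rewrite rot0; apply: Hid; by have := Hz [::]; rewrite cats0.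
have E : @KQ K n Q = @wspan K n Q.
  apply: functional_extensionality => f; apply: propositional_extensionality; split.
    move=> [ff [g [h [Hg [Hh Hf]]]]].
    have Hh' := relJ_wspan K n Q Hid Hrot h Hh.
    have -> : f = padd g h by apply: functional_extensionality.
    exact: wspan_add.
  move=> Hf; split; first by case: Hf.
  exists f, (@pzero K n); split => //; split; first exact: relJ0.
  by move=> w; rewrite /pzero GRing.addr0.
have Hpw : prime_ideal (@wspan K n Q) by apply: wspan_prime.
have Z : forall h : ncp K n, (forall w, h w = 0%R) -> wspan Q h by move=> h; exact: wspan_zero.
split => //; first by rewrite E.
exists n, Q, id; split => //.
rewrite E; split => //; split.
- by move=> c f g _ _; apply: Z => w; rewrite /psub GRing.subrr.
- by move=> f g _ _; apply: Z => w; rewrite /psub GRing.subrr.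
- by apply: Z => w; rewrite /psub GRing.subrr.
- by [].
- move=> g fg; exists g; split => //; by apply: Z => w; rewrite /psub GRing.subrr.
Qed.
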